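(* Let $m,n$ be integers with $m\equiv n\equiv 0\pmod 4$ and $m,n>4$. Then the direct product $C_m\times C_n$ is a distance magic graph, but it is not a balanced distance magic graph.
   Context: All graphs are finite and simple; $C_n$ denotes the cycle on $n$ vertices. For a graph $G$ and vertex $x$, $N(x)$ is the (open) neighborhood of $x$. A distance magic labeling of a graph $G$ of order $N$ is a bijection $\ell\colon V(G)\to\{1,\dots,N\}$ for which there is a constant $k$ such that $\sum_{y\in N(x)}\ell(y)=k$ for every $x\in V(G)$; $G$ is distance magic if it admits such a labeling. A balanced distance magic labeling of a graph with an even number $N$ of vertices is a distance magic labeling $\ell$ such that for every vertex $w$: whenever $u\in N(w)$ has $\ell(u)=i$, there is $v\in N(w)$ with $\ell(v)=N+1-i$; a graph is balanced distance magic if it has an even number of vertices and admits such a labeling. The direct product $G\times H$ has vertex set $V(G)\times V(H)$, with $(g,h)$ adjacent to $(g',h')$ iff $gg'\in E(G)$ and $hh'\in E(H)$. *)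

(* Defs.v *)
From mathcomp Require Import all_boot.
Set Implicit Arguments. Unset Strict Implicit. Unset Printing Implicit Defensive.

(* The cycle C_n on vertex set 'I_n : i ~ j iff j = i+1 mod n or i = j+1 mod n
   (a simple cycle when n >= 3). *)
Definition cycle_adj (n : nat) : rel 'I_n :=
  fun i j => (val j == (val i).+1 %% n) || (val i == (val j).+1 %% n).

Definition direct_prod_adj (T1 T2 : finType) (e1 : rel T1) (e2 : rel T2)
  : rel (T1 * T2) :=
  fun x y => e1 x.1 y.1 && e2 x.2 y.2.

Definition nbr_sum (T : finType) (e : rel T) (l : T -> nat) (x : T) : nat :=
  \sum_(y : T | e x y) l y.

Definition is_labeling (T : finType) (l : T -> nat) : Prop :=
  injective l /\ (forall x, 1 <= l x <= #|T|).

Definition distance_magic_labeling (T : finType) (e : rel T) (l : T -> nat) : Prop :=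
  is_labeling l /\ exists k, forall x, nbr_sum e l x = k.

Definition distance_magic (T : finType) (e : rel T) : Prop :=
  exists l, distance_magic_labeling e l.

Definition balanced_distance_magic_labeling (T : finType) (e : rel T) (l : T -> nat) : Prop :=
  ~~ odd #|T| /\ distance_magic_labeling e l /\
  forall w u, e w u -> exists v, e w v /\ l v = #|T|.+1 - l u.

Definition balanced_distance_magic (T : finType) (e : rel T) : Prop :=
  ~~ odd #|T| /\ exists l, balanced_distance_magic_labeling e l.

(* Main.v *)
Require Import Defs.
From mathcomp Require Import all_boot zify.
Set Implicit Arguments. Unset Strict Implicit.

Lemma ord_pos m (i : 'I_m) : 0 < m.
Proof. exact: leq_ltn_trans (leq0n i) (ltn_ord i). Qed.

Definition onxt m (i : 'I_m) : 'I_m := Ordinal (ltn_pmod i.+1 (@ord_pos m i)).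
Definition oprv m (i : 'I_m) : 'I_m := Ordinal (ltn_pmod (i + m.-1) (@ord_pos m i)).

Lemma modS_small m j : j < m -> j.+1 %% m = if j.+1 == m then 0 else j.+1.
Proof.
move=> lt; case: eqP => [->|ne]; first by rewrite modnn.
rewrite modn_small //; lia.
Qed.

Lemma modP_small m i : i < m -> (i + m.-1) %% m = if i == 0 then m.-1 else i.-1.
Proof.
move=> lt; case: eqP => [->|ne]; first by rewrite add0n modn_small //; lia.
have -> : i + m.-1 = i.-1 + m by lia.
by rewrite modnDr modn_small //; lia.
Qed.

Lemma cycle_adjE m (i j : 'I_m) :
  cycle_adj i j = (j == onxt i) || (j == oprv i).
Proof.
rewrite /cycle_adj -!val_eqE /=.
have hi := ltn_ord i; have hj := ltn_ord j.
congr orb.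
rewrite modS_small // modP_small //.
case: (j.+1 =P m) => ?; case: ((i : nat) =P 0) => ?;
  lia.
Qed.

Lemma onxt_prv m (i : 'I_m) : 2 < m -> onxt i != oprv i.
Proof.
move=> m2; rewrite -val_eqE /= modS_small // modP_small //.
have hi := ltn_ord i.
case: (i.+1 =P m) => ?; case: ((i : nat) =P 0) => ?; lia.
Qed.

Lemma cycle_sum m (i : 'I_m) (F : 'I_m -> nat) : 2 < m ->
  \sum_(j | cycle_adj i j) F j = F (onxt i) + F (oprv i).
Proof.
move=> m2.
rewrite (bigD1 (onxt i)) /=; last by rewrite cycle_adjE eqxx.
rewrite (bigD1 (oprv i)) /=; last first.
  by rewrite cycle_adjE eqxx orbT /= eq_sym onxt_prv.
rewrite big1 ?addn0 // => j /andP [/andP [adj h1] h2].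
by move: adj; rewrite cycle_adjE (negbTE h1) (negbTE h2).
Qed.
Definition flip1 (r : nat) := if odd r then r.-1 else r.+1.
Definition Ep (r s : nat) :=
  4 * (if s < 2 then r else flip1 r) + (if r < 2 then s else flip1 s).
Definition Lab M N a r b s :=
  1 + 16 * (M * (if r < 2 then b else N.-1 - b) + (if s < 2 then a else M.-1 - a))
  + Ep r s.

Lemma Lab_square M N a a2 b b2 r s : a < M -> a2 < M -> b < N -> b2 < N -> r < 4 -> s < 4 ->
  Lab M N a r b s + Lab M N a2 ((r+2) %% 4) b s + Lab M N a r b2 ((s+2) %% 4)
  + Lab M N a2 ((r+2) %% 4) b2 ((s+2) %% 4) = 2 * (16 * M * N + 1).
Proof.
move=> ha ha2 hb hb2 hr hs.
have e1 : M * (N.-1 - b) + M * b = M * N - M.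
  by rewrite -mulnDr subnK ?mulnBr ?muln1; [|lia]; case: N hb {hb2} => //= N' _; rewrite mulnS; lia.
have e2 : M * (N.-1 - b2) + M * b2 = M * N - M.
  by rewrite -mulnDr subnK ?mulnBr ?muln1; [|lia]; case: N hb2 {hb e1} => //= N' _; rewrite mulnS; lia.
have e3 : M <= M * N by case: N hb {e1 e2 hb2} => // N' _; rewrite mulnS; lia.
rewrite /Lab /Ep /flip1.
do 4?[case: r hr => [|r] hr]; do 4?[case: s hs => [|s] hs]; rewrite /= ?mulnA; lia.
Qed.

Lemma Ep_lt r s : r < 4 -> s < 4 -> Ep r s < 16.
Proof. by move=> hr hs; do 4?[case: r hr => [|r] hr]; do 4?[case: s hs => [|s] hs]. Qed.

Lemma Ep_inj r s r' s' : r < 4 -> s < 4 -> r' < 4 -> s' < 4 ->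
  Ep r s = Ep r' s' -> r = r' /\ s = s'.
Proof.
move=> hr hs hr' hs'.
do 4?[case: r hr => [|r] hr]; do 4?[case: s hs => [|s] hs];
do 4?[case: r' hr' => [|r'] hr']; do 4?[case: s' hs' => [|s'] hs'] => //.
Qed.

Lemma Lab_range M N a r b s : a < M -> b < N -> r < 4 -> s < 4 ->
  1 <= Lab M N a r b s <= 16 * M * N.
Proof.
move=> ha hb hr hs; have := Ep_lt hr hs.
have h1 : M * (if r < 2 then b else N.-1 - b) <= M * N.-1.
  by apply: leq_mul => //; case: ifP; lia.
have h2 : M * N.-1 + M = M * N.
  by case: N hb {h1} => // N' _; rewrite mulnS /=; lia.
rewrite /Lab; move: h1; case: (r < 2); case: (s < 2) => /= h1; rewrite -mulnA; lia.
Qed.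

Lemma Lab_inj M N a r b s a' r' b' s' :
  a < M -> b < N -> r < 4 -> s < 4 -> a' < M -> b' < N -> r' < 4 -> s' < 4 ->
  Lab M N a r b s = Lab M N a' r' b' s' -> [/\ a = a', r = r', b = b' & s = s'].
Proof.
move=> ha hb hr hs ha' hb' hr' hs'.
have := Ep_lt hr hs; have := Ep_lt hr' hs'.
rewrite /Lab.
set X := (M * _ + _); set X' := (M * _ + _).
move=> l1 l2 e.
have eE : Ep r s = Ep r' s' by lia.
have eX : X = X' by lia.
case: (Ep_inj hr hs hr' hs' eE) => ??; subst r' s'.
move: eX; rewrite /X /X'.
set be := (if r < 2 then _ else _); set be' := (if r < 2 then _ else _).
set al := (if s < 2 then _ else _); set al' := (if s < 2 then _ else _).
have hal : al < M by rewrite /al; case: ifP; lia.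
have hal' : al' < M by rewrite /al'; case: ifP; lia.
move=> e2.
have ebe : be = be'.
  have := congr1 (fun t => t %/ M) e2; rewrite /= !(mulnC M) !divnMDl ?divn_small ?addn0 //; lia.
have eal : al = al' by move: e2; rewrite ebe; lia.
move: ebe eal; rewrite /be /be' /al /al'.
case: ifP => _; case: ifP => _ ? ?; split => //; lia.
Qed.

Lemma nxt_prv4 M (x : 'I_(M*4)) : (onxt x : nat) %% 4 = ((oprv x : nat) %% 4 + 2) %% 4.
Proof.
have hx := ltn_ord x.
rewrite /= modS_small // modP_small //.
case: (x.+1 =P M*4) => ?; case: ((x : nat) =P 0) => ?; lia.
Qed.

Lemma adj_both m (j i1 i2 : 'I_m) : 4 < m -> val i1 = 1 -> val i2 = m.-1 ->
  cycle_adj i1 j -> cycle_adj i2 j -> val j = 0.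
Proof.
move=> hm h1 h2; have hj := ltn_ord j.
rewrite /cycle_adj h1 h2 (modS_small (_ : 1 < m)); last by lia.
rewrite (modS_small (_ : m.-1 < m)); last by lia.
rewrite (modS_small hj).
case: j hj => k hk /= _.
case: (k.+1 =P m) => ?; case: (2 =P m) => ?; case: (m.-1.+1 =P m) => ?; lia.
Qed.

Theorem mainTheorem10 (m n : nat) :
  4 %| m -> 4 %| n -> 4 < m -> 4 < n ->
  distance_magic (direct_prod_adj (@cycle_adj m) (@cycle_adj n)) /\
  ~ balanced_distance_magic (direct_prod_adj (@cycle_adj m) (@cycle_adj n)).
Proof.
move=> /dvdnP [M ->] /dvdnP [N ->] hm hn.
have cardT : #|{: 'I_(M*4) * 'I_(N*4)}| = M * 4 * (N * 4) by rewrite card_prod !card_ord.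
split.
  pose lab (x : 'I_(M*4) * 'I_(N*4)) :=
    Lab M N (x.1 %/ 4) (x.1 %% 4) (x.2 %/ 4) (x.2 %% 4).
  exists lab; split; [split|].
    move=> [i j] [i' j']; rewrite /lab /=.
    have hi := ltn_ord i; have hj := ltn_ord j.
    have hi' := ltn_ord i'; have hj' := ltn_ord j'.
    move/Lab_inj; case; try lia.
    move=> e1 e2 e3 e4; congr pair; apply: val_inj => /=.
      by rewrite (divn_eq i 4) (divn_eq i' 4) e1 e2.
    by rewrite (divn_eq j 4) (divn_eq j' 4) e3 e4.
    move=> [i j]; rewrite cardT /lab /=.
    have hi := ltn_ord i; have hj := ltn_ord j.
    have := @Lab_range M N (i %/ 4) (i %% 4) (j %/ 4) (j %% 4).
    move=> h; have {h} := h ltac:(lia) ltac:(lia) ltac:(lia) ltac:(lia); lia.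
  exists (2 * (16 * M * N + 1)) => [[x1 x2]].
  rewrite /nbr_sum /direct_prod_adj /=.
  rewrite (eq_bigr (fun y => lab (y.1, y.2))); last by case.
  rewrite -(@pair_big_dep _ _ _ _ _ (fun i => cycle_adj x1 i) (fun _ j => cycle_adj x2 j)
    (fun i j => lab (i, j))) /=.
  rewrite cycle_sum; last by lia.
  rewrite !cycle_sum; try lia.
  have e1 := nxt_prv4 x1; have e2 := nxt_prv4 x2.
  have h1 := ltn_ord (onxt x1); have h2 := ltn_ord (oprv x1).
  have h3 := ltn_ord (onxt x2); have h4 := ltn_ord (oprv x2).
  move: (onxt x1) (oprv x1) (onxt x2) (oprv x2) e1 e2 h1 h2 h3 h4
    => a1 a2 b1 b2 e1 e2 h1 h2 h3 h4.
  rewrite /lab /= e1 e2.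
  have := @Lab_square M N (a2 %/ 4) (a1 %/ 4) (b2 %/ 4) (b1 %/ 4) (a2 %% 4) (b2 %% 4).
  move=> h; have {h} := h ltac:(lia) ltac:(lia) ltac:(lia) ltac:(lia) ltac:(lia) ltac:(lia).
  lia.
move=> [_ [l [_ [[[linj lrange] _] hbal]]]].
have p1 : 0 < M * 4 by lia.
have p2 : 0 < N * 4 by lia.
pose z1 : 'I_(M*4) := Ordinal p1.
pose z2 : 'I_(N*4) := Ordinal p2.
have a1 : direct_prod_adj (@cycle_adj (M*4)) (@cycle_adj (N*4)) (onxt z1, onxt z2) (z1, z2).
  by rewrite /direct_prod_adj /cycle_adj /= !eqxx !orbT.
have a4 : direct_prod_adj (@cycle_adj (M*4)) (@cycle_adj (N*4)) (oprv z1, oprv z2) (z1, z2).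
  rewrite /direct_prod_adj /cycle_adj /= !add0n !(modn_small (_ : _.-1 < _)); try lia.
  by rewrite !prednK ?modnn ?eqxx //; lia.
have [v1 [av1 lv1]] := hbal _ _ a1.
have [v4 [av4 lv4]] := hbal _ _ a4.
have ev : v1 = v4 by apply: linj; rewrite lv1 lv4.
subst v4; clear lv4.
move: av1 av4; case: v1 lv1 => v11 v12 lv1; rewrite /direct_prod_adj /= => /andP [b1 b2] /andP [b3 b4].
have e1 := adj_both hm _ _ b1 b3.
have e2 := adj_both hn _ _ b2 b4.
have ez : (v11, v12) = (z1, z2).
  congr pair; apply: val_inj; rewrite /=.
    apply: e1 => //=; first by rewrite modn_small; lia.
    by rewrite add0n modn_small; lia.
  apply: e2 => //=; first by rewrite modn_small; lia.
  by rewrite add0n modn_small; lia.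
rewrite ez cardT in lv1.
have := lrange (z1, z2); rewrite cardT; lia.
Qed.
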